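(* Let $\mathcal{DP}^*_1$ be the digraph with vertex set $\{1,2\}$ and edge set $\{(1,1),(1,2),(2,2)\}$. For every positive integer $m$ there is a surjective homomorphism from $(\mathcal{DP}^*_1)^\omega$ to the digraph $(\{1,\dots,m\};\leq)$.
   Context: $(\mathcal{DP}^*_1)^\omega$ is the direct power of countably many copies of $\mathcal{DP}^*_1$: vertices are sequences in $\{1,2\}^\omega$, with an edge from $u$ to $v$ iff $(u_i,v_i)$ is an edge of $\mathcal{DP}^*_1$ for every $i$. The digraph $(\{1,\dots,m\};\leq)$ has an edge from $a$ to $b$ iff $a\leq b$. *)

(* Defs.v *)
From mathcomp Require Import all_boot.
Set Implicit Arguments. Unset Strict Implicit. Unset Printing Implicit Defensive.

Definition DP1_vert := {x : nat | (1 <= x <= 2)%N}.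

Definition DP1_edge (a b : DP1_vert) : Prop :=
  (proj1_sig a, proj1_sig b) \in [:: (1,1); (1,2); (2,2)]%N.

Definition DPw_vert := nat -> DP1_vert.
Definition DPw_edge (u v : DPw_vert) : Prop := forall i : nat, DP1_edge (u i) (v i).

Definition chain_vert (m : nat) := {k : nat | (1 <= k <= m)%N}.
Definition chain_edge (m : nat) (a b : chain_vert m) : Prop :=
  (proj1_sig a <= proj1_sig b)%N.

Definition is_hom (m : nat) (f : DPw_vert -> chain_vert m) : Prop :=
  forall u v : DPw_vert, DPw_edge u v -> chain_edge (f u) (f v).

(* Main.v *)
Require Import Defs.
From mathcomp Require Import all_boot.

Definition cnt (m : nat) (u : DPw_vert) : nat :=
  count (fun i => proj1_sig (u i) == 2) (iota 0 m.-1).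

Lemma cnt_bound m (hm : (0 < m)%N) u : (1 <= (cnt m u).+1 <= m)%N.
Proof.
rewrite /cnt /=. have := count_size (fun i => proj1_sig (u i) == 2) (iota 0 m.-1).
rewrite size_iota. by case: m hm.
Qed.

Definition fmap m (hm : (0 < m)%N) (u : DPw_vert) : chain_vert m :=
  exist _ (cnt m u).+1 (@cnt_bound m hm u).

Definition two : DP1_vert := exist _ 2 isT.
Definition one : DP1_vert := exist _ 1 isT.

Theorem mainTheorem7 (m : nat) (hm : (0 < m)%N) :
  exists f : DPw_vert -> chain_vert m,
    is_hom f /\ (forall y : chain_vert m, exists u : DPw_vert, f u = y).
Proof.
exists (@fmap m hm); split.
- move=> u v H; rewrite /chain_edge /= ltnS /cnt.
  elim: (iota 0 m.-1) => //= i s IH.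
  apply: leq_add => //.
  have := H i; rewrite /DP1_edge !inE.
  case: (u i) => a /= _; case: (v i) => b /= _.
  by case/or3P => /eqP [-> ->].
- move=> [k Hk].
  exists (fun i => if (i < k.-1)%N then two else one).
  apply: val_inj => /=.
  rewrite /cnt.
  have -> : count (fun i => proj1_sig (if (i < k.-1)%N then two else one) == 2) (iota 0 m.-1)
          = count (fun i => i < k.-1)%N (iota 0 m.-1).
    by apply: eq_count => i; case: (i < k.-1)%N.
  case/andP: Hk => H1 H2.
  have Hle : (k.-1 <= m.-1)%N by rewrite -!subn1 leq_sub2r.
  rewrite -(subnKC Hle) iotaD count_cat.
  rewrite (@eq_in_count _ _ predT (iota 0 k.-1)); last first.
    by move=> i; rewrite mem_iota /= add0n => ->.
  rewrite count_predT size_iota.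
  rewrite (@eq_in_count _ _ pred0); last first.
    by move=> i; rewrite mem_iota add0n => /andP [Hi _] /=; rewrite ltnNge Hi.
  rewrite count_pred0 addn0. by case: k H1 {H2 Hle}.
Qed.
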